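(* For every integer $d\ge 0$ define $\Phi_d:(\mathbb{R}_{\ge 0})^d\to\mathbb{R}[x]$ recursively by \[ \Phi_d(t_0,\ldots,t_{d-1})=\begin{cases}1 & d=0,\\ x+t_0 & d=1,\\ (x-t_{d-2})^2\,\Phi_{d-2}(t_0,\ldots,t_{d-3})+t_{d-1}x & d\ge 2.\end{cases} \] Then for every $d\ge 0$, $\Phi_d$ maps $(\mathbb{R}_{\ge 0})^d$ into $\mathcal{C}_d$, $\Phi_d:(\mathbb{R}_{\ge0})^d\to\mathcal{C}_d$ is surjective, and $\Phi_d$ is generically injective: there is a subset $N\subseteq(\mathbb{R}_{\ge 0})^d$ of Lebesgue measure zero such that the restriction of $\Phi_d$ to $(\mathbb{R}_{\ge0})^d\setminus N$ is injective.
   Context: A polynomial $f\in\mathbb{R}[x]$ is called copositive if $f(x)\ge 0$ for all real $x\ge 0$. $F_d$ denotes the set of monic polynomials in $\mathbb{R}[x]$ of degree exactly $d$, and $\mathcal{C}_d=\{f\in F_d: f \text{ copositive}\}$. For $d=0$, $(\mathbb{R}_{\ge0})^0$ is a single point and $\mathcal{C}_0=\{1\}$. *)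

(* Defs.v *)
From mathcomp Require Import all_boot all_order all_algebra.
From mathcomp Require Import reals.
Set Implicit Arguments. Unset Strict Implicit. Unset Printing Implicit Defensive.
Import Order.TTheory GRing.Theory Num.Theory.
Local Open Scope ring_scope.

Section Defs.
Variable R : realType.

(* Recursion of Phi on the REVERSED parameter list:
   phi_rev [:: t_{d-1}, t_{d-2}, ..., t_0]
     = (X - t_{d-2})^2 * phi_rev [:: t_{d-3}, ..., t_0] + t_{d-1} X. *)
Fixpoint phi_rev (s : seq R) : {poly R} :=
  match s with
  | [::] => 1
  | [:: a] => 'X + a%:P
  | a :: b :: r => ('X - b%:P) ^+ 2 * phi_rev r + a *: 'X
  end.

Definition Phi (d : nat) (t : d.-tuple R) : {poly R} := phi_rev (rev t).

Definition nonneg_tuple (d : nat) (t : d.-tuple R) : Prop :=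
  forall i : 'I_d, 0 <= tnth t i.

Definition copositive (p : {poly R}) : Prop := forall x : R, 0 <= x -> 0 <= p.[x].

Definition in_Cd (d : nat) (p : {poly R}) : Prop :=
  [/\ p \is monic, size p = d.+1 & copositive p].

Definition in_box (d : nat) (a b x : d.-tuple R) : Prop :=
  forall i : 'I_d, tnth a i <= tnth x i /\ tnth x i <= tnth b i.

Definition box_vol (d : nat) (a b : d.-tuple R) : R :=
  \prod_(i < d) Num.max 0 (tnth b i - tnth a i).

(* Lebesgue null set in R^d: for every eps > 0, N is covered by countably many
   closed boxes (a sequence; None = no box) with total volume <= eps. *)
Definition lebesgue_null (d : nat) (N : d.-tuple R -> Prop) : Prop :=
  forall eps : R, 0 < eps ->
  exists B : nat -> option (d.-tuple R * d.-tuple R),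
    (forall x, N x -> exists k ab, B k = Some ab /\ in_box ab.1 ab.2 x) /\
    (forall n : nat,
        \sum_(k < n) (match B k with Some ab => box_vol ab.1 ab.2 | None => 0 end)
        <= eps).

End Defs.

(* Main.v *)
Require Import Defs.
From mathcomp Require Import all_boot all_order all_algebra.
From mathcomp Require Import reals.
From mathcomp Require Import all_classical all_reals all_analysis.
From mathcomp Require Import lra.
Import Order.TTheory GRing.Theory Num.Theory.
Import numFieldNormedType.Exports.
Local Open Scope ring_scope.

Section Work.
Variable R : realType.

Lemma poly_near (q : {poly R}) (b e : R) : 0 < e ->
  exists2 d : R, 0 < d & forall y, `|y - b| < d -> `|q.[y] - q.[b]| < e.
Proof.
move=> e0.
move: (@continuous_horner R q b) => /cvgrPdist_lt/(_ e e0).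
case/nbhs_ballP => d /= d0 H; exists d => // y yb.
rewrite distrC; apply: H => /=. by rewrite -ball_normE /ball_ /= distrC.
Qed.

Lemma poly_evt (q : {poly R}) (a b : R) : a <= b ->
  exists2 c, c \in `[a, b]%R & forall t, t \in `[a, b]%R -> q.[c] <= q.[t].
Proof.
move=> ab; apply: (EVT_min ab (f := horner q)).
apply: continuous_subspaceT => x; exact: continuous_horner.
Qed.

Lemma poly_sign (q : {poly R}) (b : R) : q.[b] != 0 ->
  exists2 d : R, 0 < d & forall y, `|y - b| < d -> 0 < q.[y] * q.[b].
Proof.
move=> qb0; have e0 : 0 < `|q.[b]| by rewrite normr_gt0.
case: (@poly_near q b _ e0) => d d0 H; exists d => // y /H.
rewrite ltr_norml; case: (ltrgtP q.[b] 0) => hb.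
- rewrite ltr0_norm // => /andP[h1 h2]; rewrite nmulr_rgt0 //; lra.
- rewrite gtr0_norm // => /andP[h1 h2]; rewrite pmulr_rgt0 //; lra.
- by move: qb0; rewrite hb eqxx.
Qed.


Lemma size_sqX (b : R) : size (('X - b%:P) ^+ 2) = 3%N.
Proof. by rewrite size_exp_XsubC. Qed.

Lemma step_props (a b : R) (q : {poly R}) : q \is monic ->
  size (('X - b%:P) ^+ 2 * q + a *: 'X) = ((size q).+2)%N /\
  ('X - b%:P) ^+ 2 * q + a *: 'X \is monic.
Proof.
move=> mq.
have m2 : ('X - b%:P) ^+ 2 \is monic by apply: monic_exp; apply: monicXsubC.
have s1 : size (('X - b%:P) ^+ 2 * q) = ((size q).+2)%N.
  by rewrite size_monicM ?size_sqX ?monic_neq0.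
have s2 : (size (a *: ('X : {poly R}))%R < size (('X - b%:P) ^+ 2 * q)%R)%N.
  rewrite s1; apply: (leq_ltn_trans (size_scale_leq a 'X)).
  by rewrite size_polyX ltnS; move: (monic_neq0 mq); rewrite -size_poly_eq0; case: (size q).
split; first by rewrite size_polyDl.
by rewrite monicE lead_coefDl // -monicE monicMl.
Qed.

Lemma phi_props n (s : seq R) : (size s <= n)%N -> all (fun x => 0 <= x) s ->
  [/\ phi_rev s \is monic, size (phi_rev s) = (size s).+1 &
      forall x, 0 <= x -> 0 <= (phi_rev s).[x]].
Proof.
elim: n s => [|n IH] [|a [|b r]] //= Hs.
- by move=> _; split; [exact: monic1 | rewrite size_poly1 | move=> x _; rewrite hornerE].
- by move=> _; split; [exact: monic1 | rewrite size_poly1 | move=> x _; rewrite hornerE].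
- rewrite andbT => a0; split; [exact: monicXaddC | by rewrite size_XaddC |].
  by move=> x x0; rewrite !hornerE addr_ge0.
- case/and3P => a0 b0 ar.
  have [mq sq nq] := IH r (ltnW Hs) ar.
  have [sP mP] := @step_props a b _ mq.
  split => //; first by rewrite sP sq.
  move=> x x0; rewrite !hornerE; apply: addr_ge0; last exact: mulr_ge0.
  apply: mulr_ge0; last exact: nq.
  exact: sqr_ge0.
Qed.

Lemma phi_pos n (s : seq R) : (size s <= n)%N -> all (fun x => 0 < x) s ->
  forall x, 0 <= x -> 0 < (phi_rev s).[x].
Proof.
elim: n s => [|n IH] [|a [|b r]] //= Hs.
- by move=> _ x _; rewrite hornerE.
- by move=> _ x _; rewrite hornerE.
- rewrite andbT => a0 x x0; rewrite !hornerE; exact: ltr_wpDl.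
- case/and3P => a0 b0 ar x x0.
  have nq := IH r (ltnW Hs) ar x x0.
  rewrite !hornerE; case: (ltrgtP x 0) => hx.
  + by move: x0; rewrite leNgt hx.
  + apply: ltr_wpDl; last exact: mulr_gt0.
    by apply: mulr_ge0; [exact: sqr_ge0 | exact: ltW].
  + rewrite hx mulr0 addr0 sub0r sqrrN; apply: mulr_gt0 => //.
    exact: (exprn_gt0 2 b0). by rewrite hx in nq.
Qed.


Lemma step_eq (a a' b b' Q' : R) : a <= a' -> 0 < b -> 0 < Q' ->
  a * b = (b - b') ^+ 2 * Q' + a' * b -> b = b' /\ a = a'.
Proof.
move=> aa b0 Q0 E.
have h : (b - b') ^+ 2 * Q' = (a - a') * b by rewrite mulrBl E addrK.
have h0 : (b - b') ^+ 2 * Q' = 0.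
  apply/eqP; rewrite eq_le; apply/andP; split; last by apply: mulr_ge0; [exact: sqr_ge0|exact: ltW].
  rewrite h; nra.
have bb : b = b'.
  move/eqP: h0; rewrite mulf_eq0 (gt_eqF Q0) orbF sqrf_eq0 subr_eq0.
  by move/eqP.
split => //; move: E; rewrite -bb subrr expr0n /= mul0r add0r.
by move/(mulIf (lt0r_neq0 b0)).
Qed.

Lemma phi_inj n (s t : seq R) : (size s <= n)%N -> size s = size t ->
  all (fun x => 0 < x) s -> all (fun x => 0 < x) t -> phi_rev s = phi_rev t -> s = t.
Proof.
elim: n s t => [|n IH] [|a [|b r]] [|a' [|b' r']] //= Hs Hst; try discriminate Hst.
- rewrite !andbT => _ _ /addrI /polyC_inj -> //.
- case/and3P => a0 b0 ar; case/and3P => a0' b0' ar' E.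
  have Eb := congr1 (fun p => p.[b]) E.
  have Eb' := congr1 (fun p => p.[b']) E.
  move: Eb Eb'; rewrite /= !hornerE !subrr !expr0n /= !mul0r !add0r => Eb Eb'.
  have qb' := @phi_pos (size r) r (leqnn _) ar b' (ltW b0').
  have qb := @phi_pos (size r') r' (leqnn _) ar' b (ltW b0).
  have [bb aa] : b = b' /\ a = a'.
    case: (leP a a') => ha.
    + exact: (@step_eq a a' b b' _ ha b0 qb Eb).
    + by have [h1 h2] := @step_eq a' a b' b _ (ltW ha) b0' qb' (esym Eb').
  subst b' a'.
  move/addIr: E => /mulfI E; have /E {}E : ('X - b%:P) ^+ 2 != 0.
    by apply: monic_neq0; apply: monic_exp; apply: monicXsubC.
  move: Hst => [] Hst.
  by rewrite (IH r r' (ltnW Hs) Hst ar ar' E).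
Qed.


Lemma poly_grow (h : {poly R}) : 0 < lead_coef h -> (2 <= size h)%N ->
  forall K, exists2 M, 1 <= M & forall x, M <= x -> K <= h.[x].
Proof.
elim/poly_ind: h => [|p c IH]; first by rewrite lead_coef0 ltxx.
have [->|p0] := eqVneq p 0.
  by rewrite mul0r add0r size_polyC; case: (c != 0).
have sp : size (p * 'X + c%:P) = (size p).+1.
  by rewrite size_MXaddC (negbTE p0).
have lp : lead_coef (p * 'X + c%:P) = lead_coef p.
  rewrite lead_coefDl ?lead_coefMX // size_mulX //.
  by apply: (leq_ltn_trans (size_polyC_leq1 c)); rewrite ltnS lt0n size_poly_eq0.
rewrite lp sp ltnS => lp0 sp1 K.
have [sp2|] := leqP 2 (size p).
  have [M M1 HM] := IH lp0 sp2 (`|K| + `|c|).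
  exists M => // x xM; rewrite !hornerE.
  have := HM x xM; have := ler_norm K; have := ler_norm (- c); rewrite normrN.
  move=> h1 h2 h3; have x1 : 1 <= x by apply: le_trans xM.
  have pp : 0 <= p.[x] by apply: le_trans h3; apply: addr_ge0.
  nra.
rewrite ltnS => sp1'.
have sp1e : size p = 1%N by apply/eqP; rewrite eqn_leq sp1 sp1'.
have Ep := size1_polyC sp1'.
have la : lead_coef p = p`_0 by rewrite lead_coefE sp1e.
exists (Num.max 1 ((K - c) / p`_0)); first by rewrite le_max lexx.
move=> x; rewrite ge_max => /andP[x1 xK].
rewrite Ep !hornerE; rewrite la in lp0.
move: xK; rewrite ler_pdivrMr // => xK; nra.
Qed.

Lemma poly_posmin (h : {poly R}) (M : R) : 0 < M ->
  (forall x, 0 <= x -> 0 < h.[x]) ->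
  (forall x, M <= x -> 1 <= h.[x]) ->
  exists2 e, 0 < e & forall x, 0 <= x -> e <= h.[x].
Proof.
move=> M0 hpos hM; have [c cI cmin] := @poly_evt h 0 M (ltW M0).
move: cI; rewrite in_itv /= => /andP[c0 cM].
exists (Num.min 1 h.[c]); first by rewrite lt_min ltr01 hpos.
move=> x x0; case: (leP x M) => xM.
- rewrite ge_min; apply/orP; right; apply: cmin; by rewrite in_itv /= x0 xM.
- rewrite ge_min; apply/orP; left; apply: hM; exact: ltW.
Qed.

Lemma double_root (g : {poly R}) (b : R) : 0 < b ->
  (forall x, 0 <= x -> 0 <= g.[x]) -> root g b ->
  exists q, g = q * ('X - b%:P) ^+ 2.
Proof.
move=> b0 gnn /factor_theorem [g1 Eg].
have [/factor_theorem [q Eq] | nz] := boolP (root g1 b).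
  by exists q; rewrite Eg Eq -mulrA -expr2.
exfalso.
case: (@poly_sign _ _ nz) => d d0 H.
pose eta := Num.min d b / 2.
have mdb : Num.min d b <= d by rewrite ge_min lexx.
have mbb : Num.min d b <= b by rewrite ge_min lexx orbT.
have mp : 0 < Num.min d b by rewrite lt_min d0 b0.
have eta0 : 0 < eta by rewrite divr_gt0.
have etad : eta < d by rewrite /eta; lra.
have etab : eta < b by rewrite /eta; lra.
move: nz; rewrite rootE => nz.
case: (ltrgtP g1.[b] 0) => hb; last by rewrite hb eqxx in nz.
- have := H (b + eta); rewrite addrAC subrr add0r gtr0_norm // => /(_ etad) hy.
  have := gnn (b + eta); rewrite Eg !hornerE addrAC subrr add0r.
  move=> /(_ ltac:(lra)); nra.
- have := H (b - eta); rewrite addrAC subrr add0r normrN gtr0_norm // => /(_ etad) hy.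
  have := gnn (b - eta); rewrite Eg !hornerE addrAC subrr add0r.
  move=> /(_ ltac:(lra)); nra.
Qed.

Lemma quot_copos (g q : {poly R}) (b : R) : 0 <= b ->
  (forall x, 0 <= x -> 0 <= g.[x]) -> g = q * ('X - b%:P) ^+ 2 ->
  forall x, 0 <= x -> 0 <= q.[x].
Proof.
move=> b0 gnn Eg.
have key : forall x, 0 <= x -> x != b -> 0 <= q.[x].
  move=> x x0 xb; have := gnn x x0; rewrite Eg hornerM horner_exp hornerXsubC.
  have : 0 < (x - b) ^+ 2 by rewrite exprn_even_gt0 // subr_eq0.
  move=> h1 h2. nra.
move=> x x0; have [xb|xb] := eqVneq x b; last exact: key.
subst x; rewrite leNgt; apply/negP => qb.
have nz : q.[b] != 0 by rewrite lt_eqF.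
case: (@poly_sign _ _ nz) => d d0 H.
have := H (b + d / 2); rewrite addrAC subrr add0r gtr0_norm ?divr_gt0 //.
move=> /(_ ltac:(lra)) hy.
have := key (b + d / 2) ltac:(lra); rewrite -subr_eq0 addrAC subrr add0r.
move=> /(_ ltac:(by rewrite gt_eqF ?divr_gt0)) hq; nra.
Qed.


Lemma surj_step (p : {poly R}) : p \is monic -> (3 <= size p)%N ->
  (forall x, 0 <= x -> 0 <= p.[x]) ->
  exists a b q, [/\ 0 <= a /\ 0 <= b, q \is monic, size q = (size p - 2)%N,
     (forall x, 0 <= x -> 0 <= q.[x]) & p = ('X - b%:P) ^+ 2 * q + a *: 'X].
Proof.
move=> mp sp pnn.
pose S := [set a : R | 0 <= a /\ forall x, 0 <= x -> a * x <= p.[x]]%classic.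
have S0 : S 0 by split => // x x0; rewrite mul0r; exact: pnn.
have Sub : ubound S p.[1].
  by move=> a [_ Ha]; have := Ha 1 ler01; rewrite mulr1.
have hs : has_sup S by split; [exists 0 | exists p.[1]].
pose A := sup S.
have A0 : 0 <= A := sup_upper_bound hs S0.
have AS : forall x, 0 <= x -> A * x <= p.[x].
  move=> x x1; have [->|xn] := eqVneq x 0; first by rewrite mulr0 pnn.
  have x0 : 0 < x by rewrite lt_def xn x1.
  rewrite -ler_pdivlMr //; apply: ge_sup; first by exists 0.
  by move=> a [_ Ha]; rewrite ler_pdivlMr //; apply: Ha; exact: ltW.
have Amax : forall e, 0 < e -> ~ (forall x, 0 <= x -> e * x <= p.[x] - A * x).
  move=> e e0 H.
  have : S (A + e).
    split; first by rewrite addr_ge0 // ltW.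
    move=> x x0; have := H x x0; rewrite mulrDl; lra.
  move/(sup_upper_bound hs); rewrite /A; lra.
pose g := p - A *: 'X.
have gE : forall x, g.[x] = p.[x] - A * x by move=> x; rewrite /g !hornerE.
have gnn : forall x, 0 <= x -> 0 <= g.[x].
  by move=> x x0; rewrite gE subr_ge0; apply: AS.
have sAX : (size (- (A *: ('X : {poly R}))) < size p)%N.
  rewrite size_polyN; apply: (leq_ltn_trans (size_scale_leq A 'X)).
  by rewrite size_polyX.
have sg : size g = size p by rewrite /g size_polyDl.
have mg : g \is monic by rewrite monicE /g lead_coefDl // -monicE.
have g0 : g != 0 by apply: monic_neq0.
suff [b [q [b0 Eq]]] : exists b q, 0 <= b /\ g = q * ('X - b%:P) ^+ 2.
  have mX : ('X - b%:P) ^+ 2 \is monic by apply: monic_exp; apply: monicXsubC.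
  have mq : q \is monic by rewrite -(monicMr q mX) -Eq.
  exists A, b, q; split => //.
  - move: sg; rewrite Eq size_Mmonic ?monic_neq0 // size_exp_XsubC addnS /=.
    by move=> <-; rewrite addnK.
  - exact: (@quot_copos _ _ _ b0 gnn Eq).
  - by rewrite mulrC -Eq /g subrK.
have [[b [b0 rb]]|nopos] := pselect (exists b, 0 < b /\ root g b).
  have [q Eq] := @double_root g b b0 gnn rb.
  by exists b, q; split => //; exact: ltW.
have gpos : forall x, 0 < x -> 0 < g.[x].
  move=> x x0; rewrite lt_def gnn ?ltW // andbT; apply/negP => /eqP gx.
  by apply: nopos; exists x; split => //; rewrite rootE gx.
have [g00|g0n] := eqVneq g.[0] 0.
  have /factor_theorem [g1 Eg1] : root g 0 by rewrite rootE g00.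
  move: Eg1; rewrite subr0 => Eg1.
  have g1E : forall x, g.[x] = g1.[x] * x by move=> x; rewrite Eg1 hornerM hornerX.
  have [g100|g10n] := eqVneq g1.[0] 0.
    have /factor_theorem [q Eq] : root g1 0 by rewrite rootE g100.
    exists 0, q; split => //; by rewrite Eg1 Eq subr0 -mulrA -expr2.
  exfalso.
  case: (ltrgtP g1.[0] 0) => hb; last by rewrite hb eqxx in g10n.
  - case: (@poly_sign _ _ g10n) => d d0 H.
    have := H (d / 2); rewrite subr0 gtr0_norm ?divr_gt0 // => /(_ ltac:(lra)) hy.
    have := gpos (d / 2); rewrite g1E => /(_ ltac:(by rewrite divr_gt0)).
    have : 0 < d / 2 by rewrite divr_gt0.
    nra.
  - have g1pos : forall x, 0 <= x -> 0 < g1.[x].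
      move=> x x1; have [->|xn] := eqVneq x 0; first by [].
      have x0 : 0 < x by rewrite lt_def xn x1.
      have := gpos x x0; rewrite g1E; nra.
    have mg1 : g1 \is monic by rewrite -(monicMr g1 (monicX R)) -Eg1.
    have sg1 : (2 <= size g1)%N.
      move: sg; rewrite Eg1 size_mulX ?monic_neq0 // => e.
      by move: sp; rewrite -e.
    have [M M1 HM] := @poly_grow g1 (ltac:(by rewrite (eqP mg1) ltr01)) sg1 1.
    move: (eqP mg1) => lg1.
    have [|e e0 He] := @poly_posmin g1 M _ g1pos HM; first lra.
    apply: (Amax e e0) => x x0; rewrite -gE g1E; have := He x x0; nra.
exfalso.
have gpos0 : forall x, 0 <= x -> 0 < g.[x].
  move=> x x1; have [->|xn] := eqVneq x 0; last by apply: gpos; rewrite lt_def xn x1.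
  by rewrite lt_def g0n gnn.
pose h := g - 'X.
have sX : (size (- ('X : {poly R})) < size g)%N by rewrite size_polyN size_polyX sg.
have lh : lead_coef h = 1 by rewrite /h lead_coefDl // (eqP mg).
have sh : (2 <= size h)%N by rewrite /h size_polyDl // sg; apply: ltnW.
have [M M1 HM] := @poly_grow h (ltac:(by rewrite lh ltr01)) sh 0.
have HgM : forall x, M <= x -> x <= g.[x].
  by move=> x /HM; rewrite /h !hornerE subr_ge0.
have [|e e0 He] := @poly_posmin g M _ gpos0 (fun x xM => le_trans (le_trans M1 xM) (HgM x xM)).
  lra.
pose e1 := Num.min e 1.
have e1e : e1 <= e by rewrite ge_min lexx.
have e11 : e1 <= 1 by rewrite ge_min lexx orbT.
have e10 : 0 < e1 by rewrite lt_min e0 ltr01.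
pose u := e1 / M.
have M0 : 0 < M by lra.
have u0 : 0 < u by rewrite divr_gt0.
have uM : u * M = e1 by rewrite /u divfK // gt_eqF.
apply: (Amax u u0) => x x0; rewrite -gE.
have := He x x0; have := HgM x.
case: (leP x M) => xM.
- move=> _ h1; nra.
- move=> /(_ (ltW xM)) h1 _; nra.
Qed.


Lemma base0 (p : {poly R}) : in_Cd 0 p -> p = 1.
Proof.
case=> mp sp _; rewrite (size1_polyC (eq_leq sp)).
by move: mp; rewrite monicE lead_coefE sp => /eqP ->.
Qed.

Lemma base1 (p : {poly R}) : in_Cd 1 p -> 0 <= p`_0 /\ p = 'X + (p`_0)%:P.
Proof.
case=> mp sp cp; split; first by rewrite -horner_coef0; exact: cp.
apply/polyP => i; rewrite coefD coefX coefC.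
case: i => [|[|i]] /=; first by rewrite add0r.
  by move: mp; rewrite monicE lead_coefE sp addr0 => /eqP.
by rewrite addr0 nth_default // sp.
Qed.

Lemma surj_seq n : forall d (p : {poly R}), (d <= n)%N -> in_Cd d p ->
  exists s : seq R, [/\ size s = d, all (fun x => 0 <= x) s & phi_rev s = p].
Proof.
elim: n => [|n IH] d p Hd hp.
  move: Hd; rewrite leqn0 => /eqP Hd; subst d.
  by exists [::]; rewrite (@base0 _ hp).
case: d Hd hp => [|[|d]] Hd hp.
- by exists [::]; rewrite (@base0 _ hp).
- have [c0 ->] := @base1 _ hp; exists [:: p`_0]; split => //=; by rewrite c0.
- case: hp => mp sp cp.
  have [a [b [q [[a0 b0] mq sq cq Ep]]]] := @surj_step p mp ltac:(by rewrite sp) cp.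
  have hq : in_Cd d q by split => //; rewrite sq sp subn2.
  have [s [ss sn Es]] := IH d q (ltnW Hd) hq.
  by exists [:: a, b & s]; split => //=; [rewrite ss | rewrite a0 b0 | rewrite Es].
Qed.

Lemma null_hyper d : lebesgue_null (fun t : d.-tuple R => exists i, tnth t i = 0).
Proof.
move=> eps e0.
pose lo (i : 'I_d) (n : nat) := [tuple (if j == i then 0 else - n%:R : R) | j < d].
pose hi (i : 'I_d) (n : nat) := [tuple (if j == i then 0 else n%:R : R) | j < d].
exists (fun k => match @unpickle ('I_d * nat)%type k with
                 | Some (i, n) => Some (lo i n, hi i n) | None => None end).
split.
- move=> x [i xi].
  pose n := Num.bound (\sum_j `|tnth x j|).
  exists (pickle (i, n)), (lo i n, hi i n); rewrite pickleK; split => // j /=.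
  rewrite !tnth_mktuple; have [->|ji] := eqVneq j i; first by rewrite xi lexx.
  have : `|tnth x j| <= n%:R.
    apply: (le_trans _ (ltW (archi_boundP _))); last by apply: sumr_ge0.
    by rewrite (bigD1 j) //= lerDl sumr_ge0.
  by rewrite ler_norml => /andP.
- move=> n; rewrite big1 ?ltW // => k _ /=.
  case: (unpickle k) => [[i m]|] //=.
  by rewrite /box_vol (bigD1 i) //= !tnth_mktuple eqxx subrr maxxx mul0r.
Qed.

End Work.

Theorem theorem1 (R : realType) (d : nat) :
  (forall t : d.-tuple R, nonneg_tuple t -> in_Cd d (Phi t)) /\
  (forall p : {poly R}, in_Cd d p -> exists t : d.-tuple R, nonneg_tuple t /\ Phi t = p) /\
  (exists N : d.-tuple R -> Prop,
      lebesgue_null N /\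
      (forall s t : d.-tuple R, nonneg_tuple s -> nonneg_tuple t -> ~ N s -> ~ N t ->
         Phi s = Phi t -> s = t)).
Proof.
split; [|split].
- move=> t tn; rewrite /Phi.
  have an : all (fun x => 0 <= x) (rev t).
    by apply/allP => x; rewrite mem_rev => /tnthP [i ->]; exact: tn i.
  have [m s c] := @phi_props R _ (rev t) (leqnn _) an.
  by split => //; rewrite s size_rev size_tuple.
- move=> p hp; have [s [ss sn <-]] := @surj_seq R d d p (leqnn d) hp.
  have ss' : size (rev s) == d by rewrite size_rev ss.
  exists (Tuple ss'); split.
  + move=> i; have : tnth (Tuple ss') i \in rev s by exact: mem_tnth.
    by rewrite mem_rev => /(allP sn).
  + by rewrite /Phi /= revK.
- exists (fun t : d.-tuple R => exists i, tnth t i = 0); split.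
  + exact: null_hyper.
  + move=> s t sn tn Ns Nt E.
    have ps : all (fun x => 0 < x) (rev s).
      apply/allP => x; rewrite mem_rev => /tnthP [i ->].
      rewrite lt_def sn andbT; apply/eqP => h; apply: Ns; by exists i.
    have pt : all (fun x => 0 < x) (rev t).
      apply/allP => x; rewrite mem_rev => /tnthP [i ->].
      rewrite lt_def tn andbT; apply/eqP => h; apply: Nt; by exists i.
    apply: val_inj; rewrite -[val s]revK -[val t]revK; congr rev.
    apply: (@phi_inj R (size (rev s)) _ _ (leqnn _) _ ps pt E).
    by rewrite !size_rev !size_tuple.
Qed.
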